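(* Let $G=(V,E)$ be a finite Eulerian graph (every vertex has even degree). For $A\subseteq E$ let $\varepsilon(A)$ denote the number of Eulerian orientations of $(V,A)$ and $h(A)$ the number of half graphs of $(V,A)$. Let $G\times K_2$ be the bipartite double cover of $G$. Then $$\varepsilon(G\times K_2)=h(G\times K_2)=\sum_{A\subseteq E}\varepsilon(A)\,h(E\setminus A).$$
   Context: An Eulerian orientation of a graph is an orientation in which every vertex has in-degree equal to out-degree. A half graph of a graph $F$ is a subset $S$ of its edges such that every vertex $v$ is incident to exactly $d_F(v)/2$ edges of $S$. The bipartite double cover $G\times K_2$ has vertex set $V\times\{0,1\}$, and for every edge $uv\in E$ it contains the two edges $(u,0)(v,1)$ and $(u,1)(v,0)$. *)

(* Defs.v *)
From mathcomp Require Import all_boot.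
Set Implicit Arguments. Unset Strict Implicit. Unset Printing Implicit Defensive.

Section Graphs.
Variables (V E : finType) (ends : E -> V * V).

Definition loopless := forall e : E, (ends e).1 != (ends e).2.

Definition deg (A : {set E}) (v : V) : nat :=
  #|[set e in A | ((ends e).1 == v) || ((ends e).2 == v)]|.

Definition eulerian_graph : Prop := forall v : V, ~~ odd (deg setT v).

(* An orientation of (V, A) is encoded by a bool per edge of A (true = reversed);
   entries outside A are fixed to false so orientations are counted exactly once. *)
Definition tail (o : {ffun E -> bool}) (e : E) : V :=
  if o e then (ends e).2 else (ends e).1.
Definition head (o : {ffun E -> bool}) (e : E) : V :=
  if o e then (ends e).1 else (ends e).2.

Definition eulerian_orientation (A : {set E}) (o : {ffun E -> bool}) : bool :=
  [forall e, (e \notin A) ==> ~~ o e] &&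
  [forall v, #|[set e in A | head o e == v]| == #|[set e in A | tail o e == v]|].

Definition n_eul_orient (A : {set E}) : nat :=
  #|[set o : {ffun E -> bool} | eulerian_orientation A o]|.

Definition half_graph (A S : {set E}) : bool :=
  (S \subset A) && [forall v, (deg S v).*2 == deg A v].

Definition n_half (A : {set E}) : nat := #|[set S : {set E} | half_graph A S]|.

End Graphs.

Definition dc_ends (V E : finType) (ends : E -> V * V) (x : E * bool) :
  (V * bool) * (V * bool) :=
  (((ends x.1).1, x.2), ((ends x.1).2, ~~ x.2)).

(* Main.v *)
Require Import Defs.
From mathcomp Require Import all_boot zify.
Set Implicit Arguments. Unset Strict Implicit. Unset Printing Implicit Defensive.

Lemma card_bij (T1 T2 : finType) (P : {set T1}) (Q : {set T2}) f g :
  {in P, forall x, f x \in Q} -> {in Q, forall y, g y \in P} ->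
  {in P, cancel f g} -> {in Q, cancel g f} -> #|P| = #|Q|.
Proof.
move=> fPQ gQP fK gK; apply/eqP; rewrite eqn_leq; apply/andP; split.
- rewrite -(card_in_imset (can_in_inj fK)); apply: subset_leq_card.
  by apply/subsetP=> y /imsetP [x xP ->]; apply: fPQ.
- rewrite -(card_in_imset (can_in_inj gK)); apply: subset_leq_card.
  by apply/subsetP=> y /imsetP [x xP ->]; apply: gQP.
Qed.

Lemma cardsU_disj (T : finType) (X Y : {set T}) :
  (forall x, x \in X -> x \in Y -> False) -> #|X :|: Y| = #|X| + #|Y|.
Proof.
move=> H; rewrite cardsU.
have -> : X :&: Y = set0.
  by apply/setP=> x; rewrite !inE; apply/negP=> /andP [a b]; exact: H a b.
by rewrite cards0 subn0.
Qed.

Lemma deg_split (V E : finType) (ends : E -> V * V) (o : {ffun E -> bool})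
  (A : {set E}) w : loopless ends ->
  deg ends A w = #|[set e in A | Defs.head ends o e == w]| + #|[set e in A | Defs.tail ends o e == w]|.
Proof.
move=> L; rewrite /deg -cardsU_disj.
  apply: eq_card => e; rewrite !inE /Defs.head /Defs.tail.
  by case: (o e); case: (e \in A) => //=; rewrite orbC.
move=> e; rewrite !inE /Defs.head /Defs.tail => /andP [_ /eqP h] /andP [_ /eqP t].
by move: (L e); case: (o e) h t => -> ->; rewrite eqxx.
Qed.

Lemma deg_compl (V E : finType) (ends : E -> V * V) (A : {set E}) w :
  deg ends setT w = deg ends A w + deg ends (~: A) w.
Proof.
rewrite /deg -cardsU_disj.
  by apply: eq_card => e; rewrite !inE; case: (e \in A); rewrite /= ?orbF.
by move=> e; rewrite !inE => /andP [-> _] /andP [].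
Qed.

Lemma deg_cover (V E : finType) (ends : E -> V * V) (S : {set E * bool}) w c :
  loopless ends ->
  deg (dc_ends ends) S (w, c) =
  #|[set e | (((ends e).1 == w) || ((ends e).2 == w)) && ((e, ((ends e).1 == w) == c) \in S)]|.
Proof.
move=> L; rewrite /deg.
apply: (@card_bij _ _ _ _ fst (fun e => (e, ((ends e).1 == w) == c))).
- move=> [e b]; rewrite !inE /dc_ends /= !xpair_eqE.
  have Le := L e.
  case E1: ((ends e).1 == w); case E2: ((ends e).2 == w) => //=;
   (try by move/eqP: E1 => E1; move/eqP: E2 => E2; rewrite E1 E2 eqxx in Le);
  by case: b; case: c; rewrite /= ?orbF ?andbT ?andbF.
- move=> e; rewrite !inE /dc_ends /= !xpair_eqE => /andP [inc inS]; rewrite inS /=.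
  clear inS; by case: ((ends e).1 == w) inc => /= [|->]; case: c.
- move=> [e b]; rewrite !inE /dc_ends /= !xpair_eqE => /andP [_].
  have Le := L e.
  case E1: ((ends e).1 == w); case E2: ((ends e).2 == w) => //=;
   (try by move/eqP: E1 => E1; move/eqP: E2 => E2; rewrite E1 E2 eqxx in Le);
  by case: b; case: c; rewrite /= ?orbF ?andbT ?andbF.
- by [].
Qed.

Definition gmap (E : finType) (t : {set E} * ({ffun E -> bool} * {set E})) : {set E * bool} :=
  [set x | if x.1 \in t.1 then t.2.1 x.1 == x.2 else x.1 \in t.2.2].

Lemma deg_gmap (V E : finType) (ends : E -> V * V) (A : {set E}) (o : {ffun E -> bool})
  (T : {set E}) w c : loopless ends -> T \subset ~: A ->
  deg (dc_ends ends) (gmap (A, (o, T))) (w, c) =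
  deg ends T w + #|[set e in A | (if c then Defs.head ends o e else Defs.tail ends o e) == w]|.
Proof.
move=> L TA; rewrite deg_cover // /deg -cardsU_disj.
  apply: eq_card => e; rewrite !inE /=.
  case eA: (e \in A).
    have -> : (e \in T) = false.
      by apply/negP => /(subsetP TA); rewrite inE eA.
    rewrite /Defs.head /Defs.tail /=.
    have Le := L e.
    case E1: ((ends e).1 == w); case E2: ((ends e).2 == w) => //=;
     (try by move/eqP: E1 => E1; move/eqP: E2 => E2; rewrite E1 E2 eqxx in Le);
     by case: c; case: (o e); rewrite /= ?E1 ?E2.
  by rewrite andbC orbF.
move=> e; rewrite !inE => /andP [eT _] /andP [eA _].
by move/(subsetP TA): eT; rewrite inE eA.
Qed.

Lemma deg_cover_T (V E : finType) (ends : E -> V * V) w c : loopless ends ->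
  deg (dc_ends ends) setT (w, c) = deg ends setT w.
Proof.
by move=> L; rewrite deg_cover // /deg; apply: eq_card => e; rewrite !inE andbT.
Qed.

Lemma half_gmap (V E : finType) (ends : E -> V * V) (A : {set E}) (o : {ffun E -> bool})
  (T : {set E}) : loopless ends -> T \subset ~: A -> [forall e, (e \notin A) ==> ~~ o e] ->
  half_graph (dc_ends ends) setT (gmap (A, (o, T))) =
  eulerian_orientation ends A o && half_graph ends (~: A) T.
Proof.
move=> L TA oA; rewrite /half_graph /eulerian_orientation oA TA subsetT /=.
apply/forallP/andP.
  move=> H; split; apply/forallP => v.
    have := H (v, false); have := H (v, true).
    rewrite !deg_gmap // !deg_cover_T // (deg_compl _ A) (deg_split o A) //.
    lia.
  have := H (v, false); have := H (v, true).
  rewrite !deg_gmap // !deg_cover_T // (deg_compl _ A) (deg_split o A) //.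
  lia.
move=> [/forallP Hh /forallP HT] [v c].
rewrite deg_gmap // deg_cover_T // (deg_compl _ A) (deg_split o A) //.
have := Hh v; have := HT v; case: c; lia.
Qed.

Definition fmap (E : finType) (S : {set E * bool}) : {set E} * ({ffun E -> bool} * {set E}) :=
  ([set e | ((e, false) \in S) != ((e, true) \in S)],
   ([ffun e => (((e, false) \in S) != ((e, true) \in S)) && ((e, true) \in S)],
    [set e | ((e, false) \in S) && ((e, true) \in S)])).

Lemma gfK (E : finType) (S : {set E * bool}) : gmap (fmap S) = S.
Proof.
apply/setP => [[e b]]; rewrite !inE /= ffunE.
by case: b; case: ((e, false) \in S); case: ((e, true) \in S).
Qed.

Lemma fgK (E : finType) (A : {set E}) (o : {ffun E -> bool}) (T : {set E}) :
  T \subset ~: A -> [forall e, (e \notin A) ==> ~~ o e] -> fmap (gmap (A, (o, T))) = (A, (o, T)).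
Proof.
move=> TA /forallP oA.
have nT e : e \in A -> (e \in T) = false.
  by move=> eA; apply/negP => /(subsetP TA); rewrite inE eA.
congr (_, (_, _)).
- apply/setP => e; rewrite !inE /=.
  by case eA: (e \in A) => //=; [case: (o e) | rewrite eqxx].
- apply/ffunP => e; rewrite ffunE !inE /=.
  case eA: (e \in A) => /=; first by case: (o e).
  by have := oA e; rewrite eA /= eqxx => /negbTE.
- apply/setP => e; rewrite !inE /=.
  case eA: (e \in A) => /=; last by rewrite andbb.
  by rewrite nT //; case: (o e).
Qed.

Lemma fmap_valid (E : finType) (S : {set E * bool}) :
  (fmap S).2.2 \subset ~: (fmap S).1 /\ [forall e, (e \notin (fmap S).1) ==> ~~ (fmap S).2.1 e].
Proof.
split.
  by apply/subsetP => e; rewrite !inE => /andP [-> ->].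
by apply/forallP => e; rewrite !inE ffunE /=; case: ((e, false) \in S); case: ((e, true) \in S).
Qed.

Lemma sum_card (E : finType) (X : {set E} -> pred ({ffun E -> bool})) (Z : {set E} -> pred {set E}) :
  \sum_(A : {set E}) #|[set o | X A o]| * #|[set T | Z A T]| =
  #|[set t : {set E} * ({ffun E -> bool} * {set E}) | X t.1 t.2.1 && Z t.1 t.2.2]|.
Proof.
rewrite -[RHS]sum1_card [RHS]big_mkcond /=.
transitivity (\sum_(A : {set E}) \sum_(y : {ffun E -> bool} * {set E})
   (if X A y.1 && Z A y.2 then 1 else 0)); last first.
  rewrite pair_big /=; apply: eq_big => [//|[A [o T]] _]; by rewrite ?inE /=.
apply: eq_bigr => A _.
rewrite -cardsX -sum1_card big_mkcond /=.
by apply: eq_bigr => [[o T]] _; rewrite !inE.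
Qed.

Lemma cover_loopless (V E : finType) (ends : E -> V * V) : loopless (dc_ends ends).
Proof. by move=> [e b]; rewrite /dc_ends /= xpair_eqE; case: b; rewrite andbF. Qed.

Lemma cover_key (V E : finType) (ends : E -> V * V) (o : {ffun E * bool -> bool}) w c :
  (deg (dc_ends ends) [set x | o x == x.2] (w, c)).*2 == deg (dc_ends ends) setT (w, c) =
  (#|[set e in setT | Defs.head (dc_ends ends) o e == (w, c)]| ==
   #|[set e in setT | Defs.tail (dc_ends ends) o e == (w, c)]|).
Proof.
rewrite [deg _ setT _](deg_split o _ _ (cover_loopless ends)).
have -> : deg (dc_ends ends) [set x | o x == x.2] (w, c) =
   if c then #|[set e in setT | Defs.head (dc_ends ends) o e == (w, c)]|
   else #|[set e in setT | Defs.tail (dc_ends ends) o e == (w, c)]|.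
  rewrite /deg; case: c; apply: eq_card => [[e b]];
  rewrite !inE /Defs.head /Defs.tail /dc_ends /= ?xpair_eqE;
  by case: (o (e, b)); case: b; rewrite /= ?xpair_eqE /= ?andbF ?andbT ?orbF.
case: c; set h := #|[set e in _ | Defs.head _ _ e == _]|;
  set t := #|[set e in _ | Defs.tail _ _ e == _]|; by apply/eqP/eqP; lia.
Qed.

Lemma claim1 (V E : finType) (ends : E -> V * V) :
  n_eul_orient (dc_ends ends) setT = n_half (dc_ends ends) setT.
Proof.
rewrite /n_eul_orient /n_half.
apply: (@card_bij _ _ _ _ (fun o : {ffun E * bool -> bool} => [set x | o x == x.2])
                          (fun S => [ffun x => (x \in S) == x.2])).
- move=> o; rewrite !inE /eulerian_orientation /half_graph subsetT /= => /andP [_ H].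
  apply/forallP => [[w c]]; rewrite cover_key.
  by move/forallP: H => /(_ (w, c)).
- move=> S; rewrite !inE /eulerian_orientation /half_graph subsetT /= => H.
  apply/andP; split; first by apply/forallP => x; rewrite inE.
  apply/forallP => [[w c]]; rewrite -cover_key.
  move/forallP: H => /(_ (w, c)).
  have -> // : [set x | [ffun x => (x \in S) == x.2] x == x.2] = S.
  by apply/setP => x; rewrite inE ffunE; case: (x \in S); case: x.2.
- by move=> o _; apply/ffunP => x; rewrite ffunE inE; case: (o x); case: x.2.
- by move=> S _; apply/setP => x; rewrite inE ffunE; case: (x \in S); case: x.2.
Qed.

Theorem theorem1p4 (V E : finType) (ends : E -> V * V) :
  loopless ends -> eulerian_graph ends ->
  n_eul_orient (dc_ends ends) setT = n_half (dc_ends ends) setT /\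
  n_half (dc_ends ends) setT =
    \sum_(A : {set E}) n_eul_orient ends A * n_half ends (~: A).
Proof.
move=> L _; split; first exact: claim1.
rewrite /n_eul_orient /n_half sum_card.
apply: (@card_bij _ _ _ _ (@fmap E) (@gmap E)).
- move=> S; rewrite !inE => HS.
  have [TA oA] := fmap_valid S.
  case: (fmap S) TA oA (gfK S) => A [o T] /= TA oA gS.
  by rewrite -half_gmap // gS.
- move=> [A [o T]]; rewrite !inE /= => /andP [Heo Hh].
  rewrite half_gmap ?Heo ?Hh //.
    by case/andP: Hh.
  by case/andP: Heo.
- by move=> S _; rewrite gfK.
- move=> [A [o T]]; rewrite !inE /= => /andP [Heo Hh].
  by rewrite fgK //; [case/andP: Hh | case/andP: Heo].

Qed.
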